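(* Suppose that $\Lambda$ is a row-finite $k$-graph with no sources. If there exists a vector $\xi \in \mathbb{R}^{\Lambda^0}_{>0}$ which is an eigenvector for each adjacency matrix $A_i$ of $\Lambda$, with eigenvalue $\beta_i$, then the formula $\mu(Z(\lambda)) := \beta^{-d(\lambda)} \xi_{s(\lambda)}$ ($\lambda\in\Lambda$) defines a measure on the Borel $\sigma$-algebra of $\Lambda^\infty$.
   Context: A $k$-graph is a countable small category $\Lambda$ with a functor $d:\Lambda\to\mathbb{N}^k$ with unique factorization; vertices $\Lambda^0$, range/source $r,s$; $v\Lambda^n w$ the paths of degree $n$ with range $v$ and source $w$; row-finite/no sources: $v\Lambda^n$ finite/nonempty. The adjacency matrices are $A_i(v,w)=|v\Lambda^{e_i}w|$, $1\le i\le k$. For $n\in\mathbb{Z}^k$, $\beta^n=\beta_1^{n_1}\cdots\beta_k^{n_k}$. $\Lambda^\infty$ is the set of infinite paths (degree-preserving functors $\Omega_k\to\Lambda$, where $\Omega_k$ has morphisms $(m,n)$ with $m\le n$ in $\mathbb{N}^k$), $Z(\lambda)$ the cylinder set of infinite paths beginning with $\lambda$; the cylinder sets generate the topology and the Borel $\sigma$-algebra. *)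

(* Defs.v *)
From mathcomp Require Import all_boot all_order all_algebra.
From mathcomp Require Import all_classical all_reals all_analysis.
Set Implicit Arguments. Unset Strict Implicit. Unset Printing Implicit Defensive.
Import Order.TTheory GRing.Theory Num.Theory.
Local Open Scope classical_set_scope.
Local Open Scope ring_scope.

Definition Nk (k : nat) := {ffun 'I_k -> nat}.
Definition addk k (m n : Nk k) : Nk k := [ffun i => (m i + n i)%N].
Definition subk k (n m : Nk k) : Nk k := [ffun i => (n i - m i)%N].
Definition zerok k : Nk k := [ffun => 0%N].
Definition ek k (i : 'I_k) : Nk k := [ffun j => nat_of_bool (j == i)].
Definition lek k (m n : Nk k) : bool := [forall i, (m i <= n i)%N].

(* A k-graph: a countable small category (objects [kvert], morphisms [kpath],
   range/source [krng]/[ksrc], composition [kcomp l m] = "l m" meaningful when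
   [ksrc l = krng m], identities [kid]) with a degree functor [kdeg] into N^k
   satisfying unique factorization. *)
Record kgraph (k : nat) := KGraph {
  kvert : countType;
  kpath : countType;
  krng : kpath -> kvert;
  ksrc : kpath -> kvert;
  kcomp : kpath -> kpath -> kpath;
  kid : kvert -> kpath;
  kdeg : kpath -> Nk k;
  rng_comp : forall l m, ksrc l = krng m -> krng (kcomp l m) = krng l;
  src_comp : forall l m, ksrc l = krng m -> ksrc (kcomp l m) = ksrc m;
  comp_assoc : forall l m n, ksrc l = krng m -> ksrc m = krng n ->
    kcomp (kcomp l m) n = kcomp l (kcomp m n);
  rng_idp : forall v, krng (kid v) = v;
  src_idp : forall v, ksrc (kid v) = v;
  comp_idl : forall l, kcomp (kid (krng l)) l = l;
  comp_idr : forall l, kcomp l (kid (ksrc l)) = l;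
  deg_comp : forall l m, ksrc l = krng m -> kdeg (kcomp l m) = addk (kdeg l) (kdeg m);
  deg_idp : forall v, kdeg (kid v) = zerok k;
  unique_factorization : forall l (m n : Nk k), kdeg l = addk m n ->
    exists! p : kpath * kpath,
      [/\ ksrc p.1 = krng p.2, kdeg p.1 = m, kdeg p.2 = n & l = kcomp p.1 p.2]
}.

Section KGraphDefs.
Variables (k : nat) (L : kgraph k).

Definition paths_from (v : kvert L) (n : Nk k) : set (kpath L) :=
  [set l | krng l = v /\ kdeg l = n].
Definition paths_between (v : kvert L) (n : Nk k) (w : kvert L) : set (kpath L) :=
  [set l | [/\ krng l = v, kdeg l = n & ksrc l = w]].

Definition row_finite := forall v n, finite_set (paths_from v n).
Definition no_sources := forall v n, paths_from v n !=set0.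

(* Adjacency matrix A_i(v,w) = |v Lambda^{e_i} w|, as an extended real
   (the cardinality, i.e. the counting sum of 1 over the set). *)
Definition adjacency (R : realType) (i : 'I_k) (v w : kvert L) : \bar R :=
  (\esum_(l in paths_between v (ek i) w) 1)%E.

(* Infinite paths: degree-preserving functors Omega_k -> Lambda, encoded by
   their action on morphisms (m,n), m <= n; off the domain (~~ m <= n) the
   value is normalised to x m m so that a functor has a unique encoding. *)
Definition is_inf_path (x : Nk k -> Nk k -> kpath L) : Prop :=
  [/\ forall m n, lek m n -> kdeg (x m n) = subk n m,
      forall m n p, lek m n -> lek n p ->
        ksrc (x m n) = krng (x n p) /\ kcomp (x m n) (x n p) = x m p,
      forall m, x m m = kid (krng (x m m))
    & forall m n, ~~ lek m n -> x m n = x m m].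

Definition inf_path := {x : Nk k -> Nk k -> kpath L | is_inf_path x}.

Definition cylinder (l : kpath L) : set inf_path :=
  [set x | proj1_sig x (zerok k) (kdeg l) = l].

Definition cylinders : set (set inf_path) := [set cylinder l | l in setT].

Definition borel_inf_path : set (set inf_path) := <<s cylinders >>.

End KGraphDefs.

(* mu is a (positive, extended-real valued) measure on the sigma-algebra S:
   this is the literal content of the library's measure axioms
   (measure0, measure_ge0, measure_semi_sigma_additive) for a set system S. *)
Definition is_measure_on (R : realType) (T : Type) (S : set (set T))
    (mu : set T -> \bar R) : Prop :=
  [/\ mu set0 = 0%E,
      forall A, S A -> (0 <= mu A)%E
    & forall F : nat -> set T, (forall i, S (F i)) -> trivIset setT F ->
        ((fun n => \sum_(0 <= i < n) mu (F i))%E @ \oo --> mu (\bigcup_n F n))].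

Definition beta_pow_neg (R : realType) k (beta : 'I_k -> R) (n : Nk k) : R :=
  \prod_(i < k) (beta i ^- n i).

(* Submission.v *)
Require Import Defs.
From mathcomp Require Import all_boot all_order all_algebra.
From mathcomp Require Import all_classical all_reals all_analysis.
Import Order.TTheory GRing.Theory Num.Theory.
Local Open Scope classical_set_scope.
Local Open Scope ring_scope.
Set Implicit Arguments. Unset Strict Implicit. Unset Printing Implicit Defensive.
Local Notation kcomp := Defs.kcomp.

Section Alg.
Variables (k : nat) (L : kgraph k).
Local Notation W := (kpath L).

Lemma addkC (m n : Nk k) : addk m n = addk n m.
Proof. by apply/ffunP => i; rewrite !ffunE addnC. Qed.
Lemma addk0 (m : Nk k) : addk m (zerok k) = m.
Proof. by apply/ffunP => i; rewrite !ffunE addn0. Qed.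
Lemma add0k (m : Nk k) : addk (zerok k) m = m.
Proof. by apply/ffunP => i; rewrite !ffunE add0n. Qed.
Lemma addkA (m n p : Nk k) : addk m (addk n p) = addk (addk m n) p.
Proof. by apply/ffunP => i; rewrite !ffunE addnA. Qed.
Lemma addKk (m n : Nk k) : subk (addk m n) m = n.
Proof. by apply/ffunP => i; rewrite !ffunE addKn. Qed.
Lemma subkK (m n : Nk k) : lek m n -> addk m (subk n m) = n.
Proof. by move=> /forallP H; apply/ffunP => i; rewrite !ffunE subnKC. Qed.
Lemma lek_refl (m : Nk k) : lek m m.
Proof. by apply/forallP => i. Qed.
Lemma lek_trans (m n p : Nk k) : lek m n -> lek n p -> lek m p.
Proof. by move=> /forallP H1 /forallP H2; apply/forallP => i; exact: leq_trans (H1 i) (H2 i). Qed.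
Lemma lek_addr (m n : Nk k) : lek m (addk m n).
Proof. by apply/forallP => i; rewrite ffunE leq_addr. Qed.
Lemma le0k (m : Nk k) : lek (zerok k) m.
Proof. by apply/forallP => i; rewrite ffunE. Qed.
Lemma subkk (m : Nk k) : subk m m = zerok k.
Proof. by apply/ffunP => i; rewrite !ffunE subnn. Qed.

Definition facP (l : W) (m : Nk k) (p : W * W) :=
  [/\ ksrc p.1 = krng p.2, kdeg p.1 = m, kdeg p.2 = subk (kdeg l) m & l = kcomp p.1 p.2].

Definition fac (l : W) (m : Nk k) : W * W := xget (l, l) (facP l m).

Lemma fac_ex l m : lek m (kdeg l) -> exists! p, facP l m p.
Proof.
move=> H; apply: unique_factorization; by rewrite subkK.
Qed.

Lemma facE l m : lek m (kdeg l) -> facP l m (fac l m).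
Proof.
move=> /fac_ex [p [Hp _]]; rewrite /fac; apply: xgetPex; by exists p.
Qed.

Lemma fac_uniq l m p : lek m (kdeg l) -> facP l m p -> fac l m = p.
Proof.
move=> H Hp; have [q [_ Hq]] := fac_ex H.
by rewrite -(Hq _ Hp) -(Hq _ (facE H)).
Qed.

Lemma fac_eq (p q : W) : ksrc p = krng q -> fac (kcomp p q) (kdeg p) = (p, q).
Proof.
move=> H; have D := deg_comp H.
apply: fac_uniq; first by rewrite D lek_addr.
by split => //=; rewrite D addKk.
Qed.

Lemma fac_src l m : lek m (kdeg l) -> ksrc (fac l m).1 = krng (fac l m).2.
Proof. by case/facE. Qed.
Lemma fac_deg1 l m : lek m (kdeg l) -> kdeg (fac l m).1 = m.
Proof. by case/facE. Qed.
Lemma fac_deg2 l m : lek m (kdeg l) -> kdeg (fac l m).2 = subk (kdeg l) m.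
Proof. by case/facE. Qed.
Lemma fac_comp l m : lek m (kdeg l) -> l = kcomp (fac l m).1 (fac l m).2.
Proof. by case/facE. Qed.
Lemma fac_rng1 l m : lek m (kdeg l) -> krng (fac l m).1 = krng l.
Proof. move=> H; rewrite {2}(fac_comp H) rng_comp //; exact: fac_src. Qed.
Lemma fac_src2 l m : lek m (kdeg l) -> ksrc (fac l m).2 = ksrc l.
Proof. move=> H; rewrite {2}(fac_comp H) src_comp //; exact: fac_src. Qed.

Lemma deg0_id (l : W) : kdeg l = zerok k -> l = kid (krng l).
Proof.
move=> H.
have E1 : fac (kcomp (kid (krng l)) l) (kdeg (kid (krng l))) = (kid (krng l), l).
  by apply: fac_eq; rewrite src_idp.
have E2 : fac (kcomp l (kid (ksrc l))) (kdeg l) = (l, kid (ksrc l)).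
  by apply: fac_eq; rewrite rng_idp.
rewrite comp_idl deg_idp in E1; rewrite comp_idr H in E2.
by rewrite E1 in E2; case: E2 => ->.
Qed.

Lemma fac_cancel (p q q' : W) : ksrc p = krng q -> ksrc p = krng q' ->
  kcomp p q = kcomp p q' -> q = q'.
Proof.
move=> H1 H2 E; have := fac_eq H1; rewrite E fac_eq //; by case.
Qed.

Lemma fac_trans l m n : lek m n -> lek n (kdeg l) ->
  (fac (fac l n).1 m).1 = (fac l m).1.
Proof.
move=> Hmn Hn.
set p := (fac l n).1; set q := (fac l n).2.
have Hm : lek m (kdeg p) by rewrite /p fac_deg1.
set a := (fac p m).1; set b := (fac p m).2.
have Hab : ksrc a = krng b by apply: fac_src.
have Hpq : ksrc p = krng q by apply: fac_src.
have Ep : p = kcomp a b by apply: fac_comp.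
have El : l = kcomp a (kcomp b q).
  have Hbq : ksrc b = krng q by rewrite /b fac_src2.
  rewrite -comp_assoc // -Ep; exact: fac_comp.
have Ha : kdeg a = m by apply: fac_deg1.
have Hbq : ksrc b = krng q by rewrite /b fac_src2.
by rewrite El -Ha fac_eq // rng_comp.
Qed.

Lemma fac_full l : fac l (kdeg l) = (l, kid (ksrc l)).
Proof. by rewrite -{1}(comp_idr l) fac_eq // rng_idp. Qed.

Lemma fac_zero l : fac l (zerok k) = (kid (krng l), l).
Proof. by rewrite -{1}(comp_idl l) -(deg_idp (krng l)) fac_eq // src_idp. Qed.

End Alg.

Lemma fsum_part (R : realType) (T U : choiceType) (A : set T) (P : set U) (g : T -> U) (f : T -> R) :
  finite_set A -> finite_set P -> (forall x, A x -> P (g x)) ->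
  \sum_(x \in A) f x = \sum_(u \in P) \sum_(x \in A `&` g @^-1` [set u]) f x.
Proof.
move=> fA fP AP.
under [RHS]eq_fsbigr do rewrite fsbig_mkcondr.
rewrite exchange_fsbig //; apply: eq_fsbigr => x /[!inE] Ax.
rewrite (fsbigD1 (g x)) //; last exact: AP.
rewrite ifT; last by rewrite inE.
rewrite fsbig1 ?Monoid.simpm // => u [_ /= Hu]; rewrite ifF //.
by apply/negbTE; rewrite notin_setE /preimage /= => Hg; apply: Hu; rewrite Hg.
Qed.

Section Sums.
Variables (R : realType) (k : nat) (L : kgraph k).
Variables (xi : kvert L -> R) (beta : 'I_k -> R).
Hypothesis rowfin : row_finite L.
Hypothesis nosrc : no_sources L.
Hypothesis xipos : forall v, 0 < xi v.
Hypothesis eigen : forall (i : 'I_k) (v : kvert L),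
     (\esum_(w in [set: kvert L]) (adjacency R i v w * (xi w)%:E))%E
       = (beta i * xi v)%:E.
Local Notation W := (kpath L).
Local Notation bp := (beta_pow_neg beta).

Lemma eigen_sum i u : \sum_(e \in paths_from u (ek i)) xi (ksrc e) = beta i * xi u.
Proof.
have fin w : finite_set (paths_between u (ek i) w).
  by apply: sub_finite_set (rowfin u (ek i)) => l [? ? ?].
apply: EFin_inj; rewrite -eigen.
have -> : (fun w => adjacency R i u w * (xi w)%:E)%E =
    (fun w => \esum_(l in paths_between u (ek i) w) (xi (ksrc l))%:E)%E.
  apply: funext => w; rewrite /adjacency esum_fset // ?fsumEFin // -EFinM mulr_fsuml.
  rewrite esum_fset // ?fsumEFin //; last by move=> *; rewrite lee_fin ltW.
  congr (_%:E); apply: eq_fsbigr => l /[!inE] -[_ _ ->]; by rewrite mul1r.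
rewrite esum_esum; last by move=> *; rewrite lee_fin ltW.
rewrite -(@reindex_esum _ _ _ _ (paths_from u (ek i)) snd (fun l => (xi (ksrc l))%:E)).
  by rewrite esum_fset // ?fsumEFin // => *; rewrite lee_fin ltW.
split.
- by move=> [w l] /= [_ [? ? ?]].
- move=> [w l] [w' l'] /set_mem [_ [_ _ Hw]] /set_mem [_ [_ _ Hw']] /= E.
  simpl in Hw, Hw'.
  by rewrite -Hw -Hw' E.
- by move=> l [? ?]; exists (ksrc l, l).
Qed.

Lemma beta_pos i : kvert L -> 0 < beta i.
Proof.
move=> u; have := eigen_sum i u.
have [e [He1 He2]] := nosrc u (ek i).
have fin := rowfin u (ek i).
have H : 0 < \sum_(e \in paths_from u (ek i)) xi (ksrc e).
  have Ae : paths_from u (ek i) e by split.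
  rewrite (fsbigD1 e) //=.
  apply: (lt_le_trans (xipos (ksrc e))); rewrite lerDl; apply: fsumr_ge0 => *; exact: ltW.
move=> E; rewrite E in H; by rewrite -(pmulr_lgt0 _ (xipos u)).
Qed.

Lemma bp_add m n : bp (addk m n) = bp m * bp n.
Proof.
rewrite /beta_pow_neg -big_split; apply: eq_bigr => i _.
by rewrite ffunE exprD invfM.
Qed.

Lemma bp0 : bp (zerok k) = 1.
Proof. by rewrite /beta_pow_neg big1 // => i _; rewrite ffunE expr0 invr1. Qed.

Lemma bp_e i : bp (ek i) = (beta i)^-1.
Proof.
rewrite /beta_pow_neg (bigD1 i) //= big1 ?mulr1; first by rewrite ffunE eqxx expr1.
by move=> j /negbTE Hj; rewrite ffunE Hj expr0 invr1.
Qed.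

Lemma bp_pos n : kvert L -> 0 < bp n.
Proof.
move=> u; apply: prodr_gt0 => i _; rewrite invr_gt0; apply: exprn_gt0; exact: beta_pos.
Qed.

Lemma paths0 (v : kvert L) : paths_from v (zerok k) = [set kid v].
Proof.
apply/seteqP; split => l /=.
  by move=> [<- /deg0_id].
by move=> ->; split; [rewrite rng_idp | rewrite deg_idp].
Qed.

Definition sizek (n : Nk k) := (\sum_(i < k) n i)%N.

Lemma F2_aux N : forall n v, sizek n = N ->
  \sum_(mu \in paths_from v n) (bp n * xi (ksrc mu)) = xi v.
Proof.
elim: N => [|N IH] n v.
  move=> H0; have -> : n = zerok k.
    apply/ffunP => i; rewrite ffunE; apply/eqP; rewrite -leqn0 -H0 /sizek.
    by rewrite (bigD1 i) //= leq_addr.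
  by rewrite paths0 fsbig_set1 bp0 mul1r src_idp.
move=> HN.
have [i Hi] : exists i, (0 < n i)%N.
  apply/existsP; apply: contraT; rewrite negb_exists => /forallP Hn.
  move: HN; rewrite /sizek big1 // => j _; apply/eqP; rewrite -leqn0 leqNgt; exact: Hn.
set n' := subk n (ek i).
have Hn : n = addk n' (ek i).
  by apply/ffunP => j; rewrite !ffunE; case: eqP => [->|_]; rewrite ?subn0 ?addn0 // subnK.
have Hle : lek n' n by rewrite Hn lek_addr.
have Hs : sizek n' = N.
  apply/eqP; rewrite -eqSS -HN /sizek Hn (bigD1 i) //= [X in _ == X](bigD1 i) //= !ffunE eqxx.
  rewrite addn1 -addSn; apply/eqP; congr (_ + _)%N; apply: eq_bigr => j /negbTE Hj.
  by rewrite !ffunE Hj /= ?addn0 ?subn0.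
have fin := rowfin v n; have fin' := rowfin v n'.
rewrite (@fsum_part R _ _ _ (paths_from v n') (fun mu => (fac mu n').1)) //; last first.
  by move=> mu [H1 H2]; split; [rewrite fac_rng1 ?H2 // | rewrite fac_deg1 ?H2].
rewrite -(IH n' v Hs); apply: eq_fsbigr => nu /set_mem [Hnu1 Hnu2].
rewrite (@reindex_fsbig _ _ _ _ _ (kcomp nu) (paths_from (ksrc nu) (ek i))); last first.
  split.
  - move=> e [He1 He2]; split; first split.
    + by rewrite rng_comp.
    + by rewrite deg_comp // Hnu2 He2 -Hn.
    + by rewrite /= /preimage /= -Hnu2 fac_eq.
  - by move=> e e' /set_mem [He1 _] /set_mem [He1' _] /= E; apply: (fac_cancel _ _ E).
  - move=> mu [[Hmu1 Hmu2] /= Hmu3]; rewrite /preimage /= in Hmu3.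
    have Hl : lek n' (kdeg mu) by rewrite Hmu2.
    exists (fac mu n').2; last by rewrite -{1}Hmu3 -fac_comp.
    split; first by rewrite -(fac_src Hl) Hmu3.
    by rewrite fac_deg2 // Hmu2 Hn addKk.
rewrite -(mulr_fsumr (bp n)) .
under eq_fsbigr => e /set_mem [He1 He2] do rewrite src_comp //.
rewrite eigen_sum Hn bp_add bp_e -mulrA; congr (_ * _).
by rewrite mulrA mulVf ?mul1r // gt_eqF // beta_pos.
Qed.

Lemma F2 n v : \sum_(mu \in paths_from v n) (bp n * xi (ksrc mu)) = xi v.
Proof. exact: (@F2_aux (sizek n) n v erefl). Qed.

End Sums.

Section Lists.
Variables (R : realType) (T : eqType) (f : T -> R).
Hypothesis f0 : forall x, 0 <= f x.

Definition offs (s : seq T) (x : T) := \sum_(y <- take (index x s) s) f y.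

Lemma sum_take_mono (s : seq T) i j : (i <= j)%N ->
  \sum_(y <- take i s) f y <= \sum_(y <- take j s) f y.
Proof.
move=> Hij; rewrite -(subnKC Hij) takeD big_cat /= lerDl.
by apply: sumr_ge0 => *.
Qed.

Lemma sum_take_index (s : seq T) x : x \in s ->
  \sum_(y <- take (index x s).+1 s) f y = offs s x + f x.
Proof.
move=> xs; rewrite (take_nth x); last by rewrite index_mem.
by rewrite nth_index // -cats1 big_cat /= big_seq1.
Qed.

Lemma offs_ge0 s x : 0 <= offs s x.
Proof. by apply: sumr_ge0 => *. Qed.

Lemma offs_le s x : x \in s -> offs s x + f x <= \sum_(y <- s) f y.
Proof.
move=> xs; have H := @sum_take_mono s (index x s).+1 (size s).
rewrite take_size in H; rewrite -sum_take_index //; apply: H; by rewrite index_mem.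
Qed.

Lemma offs_disj s x y t a : uniq s -> x \in s -> y \in s ->
  a + offs s x <= t < a + offs s x + f x ->
  a + offs s y <= t < a + offs s y + f y -> x = y.
Proof.
move=> us xs ys.
wlog H : x y xs ys / (index x s <= index y s)%N.
  move=> Hw H1 H2; case: (leqP (index x s) (index y s)) => Hxy.
    exact: Hw.
  by apply/esym; apply: Hw => //; exact: ltnW.
move=> /andP [H1 H2] /andP [H3 H4].
case: (ltnP (index x s) (index y s)) => Hlt.
  have : offs s x + f x <= offs s y by rewrite -sum_take_index //; exact: sum_take_mono.
  move=> Hle; have : t < t.
    apply: (lt_le_trans H2); apply: (le_trans _ H3); by rewrite -addrA lerD2l.
  by rewrite ltxx.
have E : index x s = index y s by apply/eqP; rewrite eqn_leq H Hlt.
by rewrite -(nth_index x xs) E nth_index.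
Qed.

Lemma offs_cover s a t : uniq s -> a <= t < a + \sum_(y <- s) f y ->
  exists2 x, x \in s & a + offs s x <= t < a + offs s x + f x.
Proof.
elim: s a => [|y s IH] a /=.
  by rewrite big_nil addr0 => _ /andP [H1 H2]; move: (le_lt_trans H1 H2); rewrite ltxx.
move=> /andP [ys us] /andP [H1 H2].
case: (ltP t (a + f y)) => Ht.
  by exists y; rewrite ?mem_head // /offs /= eqxx /= big_nil addr0 H1.
have [x xs Hx] : exists2 x, x \in s & a + f y + offs s x <= t < a + f y + offs s x + f x.
  apply: IH => //; rewrite Ht /=; by rewrite big_cons addrA in H2.
exists x; first by rewrite in_cons xs orbT.
have xy : (x == y) = false by apply/negbTE; apply: contraNneq ys => <-.
by rewrite /offs /= eq_sym xy /= big_cons addrA.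
Qed.

End Lists.

Section Intervals.
Variables (R : realType) (k : nat) (L : kgraph k).
Variables (xi : kvert L -> R) (beta : 'I_k -> R).
Hypothesis rowfin : row_finite L.
Hypothesis nosrc : no_sources L.
Hypothesis xipos : forall v, 0 < xi v.
Hypothesis eigen : forall (i : 'I_k) (v : kvert L),
     (\esum_(w in [set: kvert L]) (adjacency R i v w * (xi w)%:E))%E
       = (beta i * xi v)%:E.
Local Notation W := (kpath L).
Local Notation bp := (beta_pow_neg beta).

Definition sq N : Nk k := [ffun => N].
Definition one := sq 1.

Lemma sqS N : sq N.+1 = addk (sq N) one.
Proof. by apply/ffunP => i; rewrite !ffunE addn1. Qed.
Lemma sq_le N M : (N <= M)%N -> lek (sq N) (sq M).
Proof. by move=> H; apply/forallP => i; rewrite !ffunE. Qed.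
Lemma sq0 : sq 0 = zerok k.
Proof. by apply/ffunP => i; rewrite !ffunE. Qed.

Definition xi' (j : nat) : R := oapp xi 0 (@pickle_inv (kvert L) j).
Definition off0 (v : kvert L) := \sum_(0 <= j < pickle v) xi' j.
Definition ch (p : W) : seq W := finmap.enum_fset (fset_set (paths_from (ksrc p) one)).
Definition wt N (q : W) := bp (sq N) * xi (ksrc q).
Definition w (l : W) := bp (kdeg l) * xi (ksrc l).

Fixpoint A N (l : W) : R := match N with
  | 0 => off0 (krng l)
  | N'.+1 => A N' (fac l (sq N')).1 + offs (wt N) (ch (fac l (sq N')).1) (fac l (sq N')).2
  end.

Definition I N (l : W) : set R := [set t | A N l <= t < A N l + w l].
Definition TT N : set W := [set l | kdeg l = sq N].
Definition U : set R := [set t | exists v, I 0 (kid v) t].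

Lemma xi'_ge0 j : 0 <= xi' j.
Proof. rewrite /xi'; case: pickle_inv => [v|] //=; exact: ltW. Qed.

Lemma wt_ge0 N q : 0 <= wt N q.
Proof. apply: mulr_ge0; [exact/ltW/bp_pos/(ksrc q) | exact: ltW]. Qed.

Lemma w_gt0 l : 0 < w l.
Proof. apply: mulr_gt0; [exact/bp_pos/(ksrc l) | exact: xipos]. Qed.

Lemma ch_mem p q : (q \in ch p) = `[< paths_from (ksrc p) one q >].
Proof. by rewrite /ch in_fset_set // inE. Qed.

Lemma ch_uniq p : uniq (ch p).
Proof. exact: finmap.fset_uniq. Qed.

Lemma sum_ch N p : TT N p -> \sum_(q <- ch p) wt N.+1 q = w p.
Proof.
move=> Hp; rewrite /ch -fsbig_finite // /wt sqS bp_add.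
under eq_fsbigr do rewrite -mulrA.
by rewrite -mulr_fsumr F2 // /w Hp.
Qed.

Lemma A_child N p q : TT N p -> paths_from (ksrc p) one q ->
  A N.+1 (kcomp p q) = A N p + offs (wt N.+1) (ch p) q /\ w (kcomp p q) = wt N.+1 q
  /\ TT N.+1 (kcomp p q).
Proof.
move=> Hp [Hq1 Hq2].
have E : fac (kcomp p q) (sq N) = (p, q) by rewrite -Hp fac_eq.
split; first by rewrite /= E.
have Hd : kdeg (kcomp p q) = sq N.+1 by rewrite deg_comp // Hp Hq2 sqS.
by rewrite /w /wt Hd src_comp.
Qed.

Lemma dec N l : TT N.+1 l ->
  let p := (fac l (sq N)).1 in let q := (fac l (sq N)).2 in
  [/\ TT N p, paths_from (ksrc p) one q & l = kcomp p q].
Proof.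
move=> Hl p q.
have H : lek (sq N) (kdeg l) by rewrite Hl sq_le.
split.
- by rewrite /TT /= /p fac_deg1.
- split; first by rewrite /p /q fac_src.
  rewrite /q fac_deg2 // Hl; apply/ffunP => i; rewrite !ffunE; by rewrite subSnn.
- exact: fac_comp.
Qed.

Lemma child_sub N p q : TT N p -> paths_from (ksrc p) one q ->
  I N.+1 (kcomp p q) `<=` I N p.
Proof.
move=> Hp Hq t; have [E1 [E2 _]] := A_child Hp Hq.
rewrite /I E1 E2 /= => /andP [H1 H2]; apply/andP; split.
  by apply: le_trans H1; rewrite lerDl offs_ge0 // => x; exact: wt_ge0.
apply: (lt_le_trans H2); rewrite -addrA lerD2l -(sum_ch Hp).
apply: offs_le; first by move=> x; exact: wt_ge0.
by rewrite ch_mem; apply/asboolP.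
Qed.

Lemma level_sub N l : TT N.+1 l -> I N.+1 l `<=` I N (fac l (sq N)).1.
Proof.
move=> /dec [Hp Hq E]; rewrite {1}E; exact: child_sub.
Qed.

Lemma off0_le u v : (pickle u < pickle v)%N -> off0 u + xi u <= off0 v.
Proof.
move=> H; rewrite /off0.
have -> : xi u = xi' (pickle u) by rewrite /xi' pickleK_inv.
rewrite -big_nat_recr //=.
rewrite [X in _ <= X](big_cat_nat (n := (pickle u).+1)) //= lerDl.
by apply: sumr_ge0 => *; exact: xi'_ge0.
Qed.

Lemma I0 (v : kvert L) : I 0 (kid v) = [set t | off0 v <= t < off0 v + xi v].
Proof. by rewrite /I /= /w deg_idp bp0 mul1r rng_idp src_idp. Qed.

Lemma uniq_level N l l' t : TT N l -> TT N l' -> I N l t -> I N l' t -> l = l'.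
Proof.
elim: N l l' => [|N IH] l l'.
  rewrite /TT sq0 => /deg0_id -> /deg0_id -> ; rewrite !I0 /=.
  set u := krng l; set v := krng l'.
  move=> /andP [H1 H2] /andP [H3 H4]; congr kid.
  case: (ltngtP (pickle u) (pickle v)) => H.
  - have := off0_le H => Hle.
    by have := lt_le_trans (lt_le_trans H2 Hle) H3; rewrite ltxx.
  - have := off0_le H => Hle.
    by have := lt_le_trans (lt_le_trans H4 Hle) H1; rewrite ltxx.
  - by apply: (pcan_inj pickleK_inv).
move=> Hl Hl' Ht Ht'.
have [Hp Hq E] := dec Hl; have [Hp' Hq' E'] := dec Hl'.
have Ep : (fac l (sq N)).1 = (fac l' (sq N)).1.
  by apply: (IH _ _ Hp Hp'); [exact: level_sub Ht | exact: level_sub Ht'].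
move: Ht Ht'; rewrite E E' -Ep.
set p := (fac l (sq N)).1 in Hp Hq Hq' Ep *.
move: Hq'; rewrite -Ep => Hq'.
have [E1 [E2 _]] := A_child Hp Hq; have [E1' [E2' _]] := A_child Hp Hq'.
rewrite /I E1 E2 E1' E2' /= => Ht Ht'.
congr kcomp.
apply: (offs_disj (fun x => wt_ge0 N.+1 x) (ch_uniq p) _ _ Ht Ht').
- by rewrite ch_mem; apply/asboolP.
- by rewrite ch_mem; apply/asboolP.
Qed.

Lemma exists_level t : U t -> forall N, exists l, TT N l /\ I N l t.
Proof.
move=> [v Hv]; elim => [|N [p [Hp Ht]]].
  by exists (kid v); split; [rewrite /TT /= deg_idp sq0 | ].
move: Ht; rewrite /I /= -(sum_ch Hp) => Ht.
have [q qs Hq] := offs_cover (f := wt N.+1) (ch_uniq p) Ht.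
move: qs; rewrite ch_mem => /asboolP qs.
have [E1 [E2 E3]] := A_child Hp qs.
exists (kcomp p q); split; first exact: E3.
by rewrite -E1 -E2 in Hq.
Qed.

End Intervals.

Lemma fac_split k (L : kgraph k) (Q : kpath L) m n : lek m n -> lek n (kdeg Q) ->
  ksrc (fac (fac Q n).1 m).2 = krng (fac Q n).2 /\
  kcomp (fac (fac Q n).1 m).2 (fac Q n).2 = (fac Q m).2.
Proof.
move=> Hmn Hn.
set Qn := (fac Q n).1; set b := (fac Q n).2.
have Hm : lek m (kdeg Qn) by rewrite /Qn fac_deg1.
set a := (fac Qn m).1; set c := (fac Qn m).2.
have Hac : ksrc a = krng c by apply: fac_src.
have Hcb : ksrc c = krng b by rewrite /c fac_src2 // /Qn fac_src.
split => //.
have EQ : Q = kcomp a (kcomp c b).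
  rewrite -comp_assoc // -(fac_comp Hm); exact: fac_comp.
have Ha : kdeg a = m by apply: fac_deg1.
by rewrite [X in fac X _]EQ -Ha fac_eq // rng_comp.
Qed.

Section Paths.
Variables (R : realType) (k : nat) (L : kgraph k).
Variables (xi : kvert L -> R) (beta : 'I_k -> R).
Hypothesis rowfin : row_finite L.
Hypothesis nosrc : no_sources L.
Hypothesis xipos : forall v, 0 < xi v.
Hypothesis eigen : forall (i : 'I_k) (v : kvert L),
     (\esum_(w in [set: kvert L]) (adjacency R i v w * (xi w)%:E))%E
       = (beta i * xi v)%:E.
Variable v0 : kvert L.
Local Notation W := (kpath L).
Local Notation bp := (beta_pow_neg beta).
Local Notation I := (I xi beta).
Local Notation U := (U xi beta).
Local Notation A := (A xi beta).
Local Notation w := (w xi beta).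
Local Notation sq := (@sq k).
Local Notation sq_le := (@sq_le k _ _).

Definition Br N t : W := xget (kid v0) [set l | TT N l /\ I N l t].

Lemma Br_spec N t : U t -> TT N (Br N t) /\ I N (Br N t) t.
Proof.
move=> Ut; rewrite /Br; apply: (@xgetPex _ _ [set l | TT N l /\ I N l t]).
exact: exists_level.
Qed.

Lemma Br_eq N t l : U t -> TT N l -> I N l t -> Br N t = l.
Proof.
move=> Ut Hl Ht; have [H1 H2] := Br_spec N Ut.
exact: (uniq_level rowfin nosrc xipos eigen H1 Hl H2 Ht).
Qed.

Lemma I_multi M N l : TT M l -> (N <= M)%N -> I M l `<=` I N (fac l (sq N)).1.
Proof.
elim: M l => [|M IH] l Hl HNM.
  by move: HNM; rewrite leqn0 => /eqP ->; rewrite -Hl fac_full.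
case: (ltngtP N M.+1) HNM => // [HN|->] _; last by rewrite -Hl fac_full.
have [Hp _ _] := dec Hl.
have {}HN : (N <= M)%N by rewrite -ltnS.
have Hs : lek (sq M) (kdeg l) by rewrite Hl sq_le.
apply: subset_trans (level_sub rowfin nosrc xipos eigen Hl) _.
rewrite -(fac_trans (sq_le HN) Hs).
exact: IH.
Qed.

Lemma I_U M l : TT M l -> I M l `<=` U.
Proof.
move=> Hl t Ht; have := I_multi Hl (leq0n M) Ht.
by rewrite sq0 fac_zero /= => H; exists (krng l).
Qed.

Lemma Br_nest N M t : U t -> (N <= M)%N -> Br N t = (fac (Br M t) (sq N)).1.
Proof.
move=> Ut HNM; have [H1 H2] := Br_spec M Ut.
apply: Br_eq => //.
  by rewrite /TT /= fac_deg1 // H1 sq_le.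
exact: I_multi H1 HNM t H2.
Qed.

Lemma le_sizek (n : Nk k) : lek n (sq (sizek n)).
Proof.
apply/forallP => i; rewrite ffunE /sizek (bigD1 i) //=; exact: leq_addr.
Qed.

Definition pref t (n : Nk k) := (fac (Br (sizek n) t) n).1.

Lemma pref_any t n M : U t -> lek n (sq M) -> pref t n = (fac (Br M t) n).1.
Proof.
move=> Ut Hn; set M' := maxn (sizek n) M.
have [H1 _] := Br_spec M' Ut.
rewrite /pref (Br_nest Ut (leq_maxl (sizek n) M)) (Br_nest Ut (leq_maxr (sizek n) M)).
have E1 : lek (sq (sizek n)) (kdeg (Br M' t)) by rewrite H1 sq_le // leq_maxl.
have E2 : lek (sq M) (kdeg (Br M' t)) by rewrite H1 sq_le // leq_maxr.
by rewrite (fac_trans (le_sizek n) E1) (fac_trans Hn E2).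
Qed.

Lemma pref_deg t n : U t -> kdeg (pref t n) = n.
Proof.
move=> Ut; have [H1 _] := Br_spec (sizek n) Ut.
by rewrite /pref fac_deg1 // H1 le_sizek.
Qed.

Definition X t (m n : Nk k) : W :=
  if lek m n then (fac (pref t n) m).2 else (fac (pref t m) m).2.

Lemma X_inf t : U t -> is_inf_path (X t).
Proof.
move=> Ut; split.
- by move=> m n Hmn; rewrite /X Hmn fac_deg2 // pref_deg.
- move=> m n p Hmn Hnp; rewrite /X Hmn Hnp (lek_trans Hmn Hnp).
  have [H1 _] := Br_spec (sizek p) Ut.
  have Hp : lek p (kdeg (Br (sizek p) t)) by rewrite H1 le_sizek.
  have En : pref t n = (fac (pref t p) n).1.
    rewrite (pref_any Ut (lek_trans Hnp (le_sizek p))) /pref fac_trans //.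
  rewrite En; apply: fac_split => //; by rewrite pref_deg.
- move=> m; rewrite /X lek_refl; apply: deg0_id; rewrite fac_deg2 pref_deg //.
    exact: subkk.
  exact: lek_refl.
- by move=> m n /negbTE H; rewrite /X H lek_refl.
Qed.

Lemma X0 t d : U t -> X t (zerok k) d = (fac (Br (sizek d) t) d).1.
Proof. by move=> Ut; rewrite /X le0k fac_zero. Qed.

Lemma pre_cyl t (l : W) : U t ->
  let M := sizek (kdeg l) in
  X t (zerok k) (kdeg l) = l <->
  exists2 mu, paths_from (ksrc l) (subk (sq M) (kdeg l)) mu & I M (kcomp l mu) t.
Proof.
move=> Ut M; rewrite X0 //; have [H1 H2] := Br_spec M Ut.
have Hd : lek (kdeg l) (kdeg (Br M t)) by rewrite H1 le_sizek.
split.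
  move=> E; exists (fac (Br M t) (kdeg l)).2.
    split; first by have := fac_src Hd; rewrite E.
    by rewrite fac_deg2 // H1.
  by rewrite -{1}E -fac_comp.
move=> [mu [Hmu1 Hmu2] Ht].
have Hlm : ksrc l = krng mu by [].
have T : TT M (kcomp l mu).
  by rewrite /TT /= deg_comp // Hmu2 subkK // le_sizek.
by rewrite (Br_eq Ut T Ht) fac_eq.
Qed.

Definition Pre (B : set (inf_path L)) : set R :=
  [set t | U t /\ exists h : is_inf_path (X t), B (exist _ (X t) h)].

Lemma I_itv N l : I N l = [set` `[A N l, A N l + w l[%R].
Proof. by apply/seteqP; split => t; rewrite /= in_itv. Qed.

Lemma I_meas N l : measurable (I N l : set (measurableTypeR R)).
Proof. rewrite I_itv; exact: measurable_itv. Qed.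

Lemma I_leb N l : lebesgue_measure (I N l : set (measurableTypeR R)) = (w l)%:E.
Proof.
rewrite I_itv lebesgue_measure_itv /= lte_fin ltrDl (w_gt0 rowfin nosrc xipos eigen) /=.
by rewrite -EFinB addrAC subrr add0r.
Qed.

Lemma U_meas : measurable (U : set (measurableTypeR R)).
Proof.
have -> : U = \bigcup_j (if @pickle_inv (kvert L) j is Some v then I 0 (kid v) else set0).
  apply/seteqP; split => t.
    by move=> [v Hv]; exists (pickle v) => //; rewrite pickleK_inv.
  move=> [j _]; case: pickle_inv => [v Hv|//]; by exists v.
apply: bigcupT_measurable => j; case: pickle_inv => [v|//]; exact: I_meas.
Qed.

Lemma Pre_cyl (l : W) : let M := sizek (kdeg l) in
  Pre (cylinder l) = \bigcup_(mu in paths_from (ksrc l) (subk (sq M) (kdeg l))) I M (kcomp l mu).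
Proof.
move=> M; apply/seteqP; split => t.
  move=> [Ut [h /= Hc]]; have [mu H1 H2] := (pre_cyl l Ut).1 Hc.
  by exists mu.
move=> [mu Hmu Ht].
have T : TT M (kcomp l mu).
  by case: Hmu => Hmu1 Hmu2; rewrite /TT /= deg_comp // Hmu2 subkK // le_sizek.
have Ut : U t := I_U T Ht.
split => //; exists (X_inf Ut); rewrite /cylinder /=.
by apply/(pre_cyl l Ut).2; exists mu.
Qed.

End Paths.

Section Main.
Variables (R : realType) (k : nat) (L : kgraph k).
Variables (xi : kvert L -> R) (beta : 'I_k -> R).
Hypothesis rowfin : row_finite L.
Hypothesis nosrc : no_sources L.
Hypothesis xipos : forall v, 0 < xi v.
Hypothesis eigen : forall (i : 'I_k) (v : kvert L),
     (\esum_(w in [set: kvert L]) (adjacency R i v w * (xi w)%:E))%E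
       = (beta i * xi v)%:E.
Variable v0 : kvert L.
Local Notation W := (kpath L).
Local Notation bp := (beta_pow_neg beta).
Local Notation I := (I xi beta).
Local Notation U := (U xi beta).
Local Notation w := (w xi beta).
Local Notation sq := (@sq k).
Local Notation Pre := (Pre xi beta v0).
Local Notation X := (X xi beta v0).

Definition mu (B : set (inf_path L)) : \bar R := lebesgue_measure (Pre B : set (measurableTypeR R)).

Lemma Pre_meas B : (@borel_inf_path k L) B -> measurable (Pre B : set (measurableTypeR R)).
Proof.
have Hs : sigma_algebra setT [set B | measurable (Pre B : set (measurableTypeR R))].
  split.
  - rewrite /=; have -> : Pre set0 = set0 by apply/seteqP; split => t // [_ [h []]].
    exact: measurable0.
  - move=> C HB; rewrite /=; have -> : Pre (setT `\` C) = U `\` Pre C.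
      apply/seteqP; split => t.
        move=> [Ut [h [_ NB]]]; split => // -[_ [h' HB']]; apply: NB.
        by rewrite (Prop_irrelevance h h').
      move=> [Ut NP]; split => //; exists (X_inf rowfin nosrc xipos eigen v0 Ut); split => //.
      by move=> HB'; apply: NP; split => //; eexists; exact: HB'.
    apply: measurableD => //; exact: U_meas.
  - move=> F HF; rewrite /=; have -> : Pre (\bigcup_n F n) = \bigcup_n Pre (F n).
      apply/seteqP; split => t.
        by move=> [Ut [h [n _ Hn]]]; exists n => //; split => //; exists h.
      by move=> [n _ [Ut [h Hn]]]; split => //; exists h; exists n.
    exact: bigcupT_measurable.
apply: (smallest_sub Hs) => _ [l _ <-] /=.
rewrite Pre_cyl //; apply: fin_bigcup_measurable.
  by apply: sub_finite_set (rowfin (ksrc l) (subk (sq (sizek (kdeg l))) (kdeg l))) => x [].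
by move=> mu _; exact: I_meas.
Qed.

Lemma mu_cyl l : mu (cylinder l) = (bp (kdeg l) * xi (ksrc l))%:E.
Proof.
rewrite /mu Pre_cyl //.
set M := sizek (kdeg l); set n := subk (sq M) (kdeg l).
have fin := rowfin (ksrc l) n.
rewrite measure_fin_bigcup //; last first.
- by move=> mu _; exact: I_meas.
- move=> m1 m2 [H11 H12] [H21 H22] [t [Ht1 Ht2]].
  have T1 : TT M (kcomp l m1).
    by rewrite /TT /= deg_comp // H12 subkK // le_sizek.
  have T2 : TT M (kcomp l m2).
    by rewrite /TT /= deg_comp // H22 subkK // le_sizek.
  have E := uniq_level rowfin nosrc xipos eigen T1 T2 Ht1 Ht2.
  exact: (fac_cancel _ _ E).
rewrite (eq_fsbigr (fun mu => (bp (kdeg l) * (bp n * xi (ksrc mu)))%:E)); last first.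
  move=> m /set_mem [Hm1 Hm2]; transitivity ((w (kcomp l m))%:E); first exact: I_leb.
  congr (_%:E).
  by rewrite /Submission.w deg_comp // src_comp // Hm2 bp_add mulrA.
rewrite fsumEFin // -mulr_fsumr F2 //.
Qed.

Lemma mu_measure : is_measure_on (@borel_inf_path k L) mu.
Proof.
split.
- rewrite /mu; have -> : Pre set0 = set0 by apply/seteqP; split => t // [_ [h []]].
  exact: measure0.
- by move=> B _; exact: measure_ge0.
- move=> F HF Ftriv; rewrite /mu.
  have -> : Pre (\bigcup_n F n) = \bigcup_n Pre (F n).
    apply/seteqP; split => t.
      by move=> [Ut [h [n _ Hn]]]; exists n => //; split => //; exists h.
    by move=> [n _ [Ut [h Hn]]]; split => //; exists h; exists n.
  apply: (@measure_semi_sigma_additive _ _ _ lebesgue_measure (fun n => Pre (F n))).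
  + by move=> n; exact: Pre_meas.
  + move=> i j _ _ [t [[Ut [h1 H1]] [_ [h2 H2]]]].
    apply: (Ftriv i j) => //; exists (exist _ (X t) h1); split => //.
    by rewrite (Prop_irrelevance h1 h2).
  + by apply: bigcupT_measurable => n; exact: Pre_meas.
Qed.

End Main.

Theorem theorem2p19 (R : realType) (k : nat) (L : kgraph k)
    (xi : kvert L -> R) (beta : 'I_k -> R) :
  row_finite L -> no_sources L ->
  (forall v, 0 < xi v) ->
  (forall (i : 'I_k) (v : kvert L),
     (\esum_(w in [set: kvert L]) (adjacency R i v w * (xi w)%:E))%E
       = (beta i * xi v)%:E) ->
  exists mu : set (inf_path L) -> \bar R,
    is_measure_on (@borel_inf_path k L) mu /\
    forall l : kpath L,
      mu (cylinder l) = (beta_pow_neg beta (kdeg l) * xi (ksrc l))%:E.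
Proof.
move=> rowfin nosrc xipos eigen.
case: (pselect (exists v : kvert L, True)) => [[v0 _]|Hno].
  exists (mu xi beta v0); split; first exact: mu_measure.
  exact: mu_cyl.
exists (fun _ => 0%E); split; last by move=> l; exfalso; apply: Hno; exists (krng l).
split => //.
move=> F _ _.
rewrite (_ : (fun n => _) = fun _ => 0%E); first exact: cvg_cst.
by apply: funext => n; rewrite big1.
Qed.
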